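(* Let $m,n,p,q\in\mathbb{R}$ with $m<0$. Set $u=\frac{2\sqrt{-m}}{\sqrt5}$, $\alpha=\frac{16n}{u^3}$, $\beta=\frac{16p}{u^4}-5$, $\gamma=\frac{16q}{u^5}$, and $f(\theta)=\alpha\cos^2\theta+\beta\cos\theta+\cos 5\theta+\gamma$. Then $f$ has at most four critical points in the open interval $(0,\pi)$, and consequently $f$ has at most five zeros in $[0,\pi]$. *)

(* Defs.v *)
From Stdlib Require Import Reals Lra List.
Open Scope R_scope.

Definition u_of (m : R) : R := 2 * sqrt (- m) / sqrt 5.
Definition alpha_of (m n : R) : R := 16 * n / (u_of m ^ 3).
Definition beta_of (m p : R) : R := 16 * p / (u_of m ^ 4) - 5.
Definition gamma_of (m q : R) : R := 16 * q / (u_of m ^ 5).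

Definition f_of (m n p q : R) (theta : R) : R :=
  alpha_of m n * (cos theta) ^ 2 + beta_of m p * cos theta
  + cos (5 * theta) + gamma_of m q.

(* "S has at most k elements": every duplicate-free list of elements of S
   has length at most k. *)
Definition at_most (k : nat) (S : R -> Prop) : Prop :=
  forall l : list R, NoDup l -> (forall x, In x l -> S x) -> (length l <= k)%nat.

(* Main.v *)
Require Import Defs.
From Stdlib Require Import Reals List Lra Lia Classical FunctionalExtensionality.
From Coquelicot Require Import Coquelicot.
Open Scope R_scope.

Fixpoint ev (cs : list R) (x : R) : R :=
  match cs with nil => 0 | a :: l => a + x * ev l x end.

Fixpoint ladd (a b : list R) : list R :=
  match a, b with
  | nil, _ => b
  | _, nil => a
  | x :: a', y :: b' => (x + y) :: ladd a' b'
  end.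

Lemma ev_ladd a : forall b x, ev (ladd a b) x = ev a x + ev b x.
Proof. induction a as [|u a IH]; intros [|v b] x; simpl; try rewrite IH; ring. Qed.

Lemma len_ladd a : forall b, length (ladd a b) = Nat.max (length a) (length b).
Proof. induction a as [|u a IH]; intros [|v b]; simpl; try rewrite IH; lia. Qed.

Lemma ev_scale r l x : ev (map (Rmult r) l) x = r * ev l x.
Proof. induction l; simpl; try rewrite IHl; ring. Qed.

Lemma sdiv cs r : exists q, (length q <= pred (length cs))%nat /\
  forall x, ev cs x = ev cs r + (x - r) * ev q x.
Proof.
  induction cs as [|a l IH].
  - exists nil; simpl; split; [lia| intros; ring].
  - destruct IH as [q' [Hl He]].
    exists (ladd l (map (Rmult r) q')). split.
    + rewrite len_ladd, length_map. simpl. lia.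
    + intros x. simpl. rewrite ev_ladd, ev_scale. rewrite (He x). ring.
Qed.

Lemma roots_bound : forall n cs rs, (length cs <= n)%nat ->
  (exists x0, ev cs x0 <> 0) -> NoDup rs -> (forall r, In r rs -> ev cs r = 0) ->
  (length rs < length cs)%nat.
Proof.
  induction n as [|n IH]; intros cs rs Hn [x0 Hx0] Hnd Hr.
  - destruct cs; simpl in *; [lra | lia].
  - destruct rs as [|r rs'].
    + destruct cs; simpl in *; [lra | lia].
    + destruct (sdiv cs r) as [q [Hl He]].
      assert (Hr0 : ev cs r = 0) by (apply Hr; left; auto).
      inversion Hnd; subst.
      assert (length rs' < length q)%nat.
      { apply (IH q rs'); auto.
        - destruct cs; simpl in *; lia.
        - exists x0. intro Hq. apply Hx0. rewrite He, Hr0, Hq. ring.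
        - intros r' Hin. assert (Hne : r' <> r) by (intro; subst; tauto).
          assert (E := He r'). rewrite Hr0, (Hr r' (or_intror Hin)) in E.
          symmetry in E. rewrite Rplus_0_l in E. apply Rmult_integral in E as [E1|E1]; [exfalso; apply Hne; lra | lra]. }
      destruct cs; simpl in *; lia.
Qed.

Lemma NoDup_map_in (g : R -> R) (S : R -> Prop) l :
  NoDup l -> (forall x, In x l -> S x) ->
  (forall x y, S x -> S y -> g x = g y -> x = y) -> NoDup (map g l).
Proof.
  induction l as [|a l IH]; intros Hnd HS Hinj; simpl; constructor.
  - inversion Hnd; subst. intro Hin. apply in_map_iff in Hin as [y [Hy Hiny]].
    assert (y = a) by (apply Hinj; auto; [apply HS; right; auto | apply HS; left; auto]).
    subst; tauto.
  - inversion Hnd; subst. apply IH; auto. intros; apply HS; right; auto.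
Qed.

Lemma cos5 t : cos (5 * t) = 16 * cos t ^ 5 - 20 * cos t ^ 3 + 5 * cos t.
Proof.
  replace (5 * t) with (3 * t + 2 * t) by ring.
  replace (3 * t) with (2 * t + t) by ring.
  rewrite !cos_plus, !sin_plus, cos_2a, sin_2a.
  assert (H := sin2_cos2 t). unfold Rsqr in H.
  set (c := cos t) in *. set (s := sin t) in *.
  assert (Hs : s * s = 1 - c * c) by lra.
  transitivity (((c*c - s*s)*c - 2*(s*s)*c)*(c*c - s*s) - (s*s)*(2*c)*(3*c*c - s*s)).
  { ring. }
  rewrite Hs. ring.
Qed.

Theorem proposition3 (m n p q : R) (hm : m < 0) :
  at_most 4 (fun theta => 0 < theta < PI /\
                          derivable_pt_lim (f_of m n p q) theta 0)
  /\ at_most 5 (fun theta => 0 <= theta <= PI /\ f_of m n p q theta = 0).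
Proof.
  set (a := alpha_of m n). set (b := beta_of m p + 5). set (g := gamma_of m q).
  assert (Hf : f_of m n p q = fun t => ev (g :: b :: a :: (-20) :: 0 :: 16 :: nil) (cos t)).
  { apply functional_extensionality; intro t. unfold f_of. rewrite cos5.
    simpl. unfold a, b, g. ring. }
  split.
  - intros l Hnd Hl.
    set (cs := b :: 2 * a :: (-60) :: 0 :: 80 :: nil).
    assert (Hroot : forall t, 0 < t < PI -> derivable_pt_lim (f_of m n p q) t 0 -> ev cs (cos t) = 0).
    { intros t Ht Hd.
      assert (Hd2 : derivable_pt_lim (f_of m n p q) t (- sin t * ev cs (cos t))).
      { rewrite Hf. apply is_derive_Reals. unfold cs. simpl.
        auto_derive; auto. ring. }
      pose proof (uniqueness_limite _ _ _ _ Hd Hd2).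
      pose proof (sin_gt_0 t (proj1 Ht) (proj2 Ht)). nra. }
    assert (length (map cos l) < length cs)%nat.
    { apply (roots_bound 5).
      - unfold cs; simpl; lia.
      - destruct (classic (ev cs 0 = 0)); [|eauto].
        destruct (classic (ev cs 1 = 0)); [|eauto].
        destruct (classic (ev cs (-1) = 0)); [|eauto].
        exfalso. unfold cs in *; simpl in *. lra.
      - apply (NoDup_map_in cos (fun t => 0 <= t <= PI)); auto.
        + intros x Hx. destruct (Hl x Hx) as [[? ?] _]. lra.
        + intros; apply cos_inj; auto.
      - intros r Hin. apply in_map_iff in Hin as [t [<- Ht]].
        destruct (Hl t Ht); auto. }
    rewrite length_map in H. unfold cs in H; simpl in H. lia.
  - intros l Hnd Hl.
    set (cs := g :: b :: a :: (-20) :: 0 :: 16 :: nil).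
    assert (length (map cos l) < length cs)%nat.
    { apply (roots_bound 6).
      - unfold cs; simpl; lia.
      - destruct (classic (ev cs 0 = 0)); [|eauto].
        destruct (classic (ev cs 1 = 0)); [|eauto].
        destruct (classic (ev cs (-1) = 0)); [|eauto].
        destruct (classic (ev cs 2 = 0)); [|eauto].
        exfalso. unfold cs in *; simpl in *. lra.
      - apply (NoDup_map_in cos (fun t => 0 <= t <= PI)); auto.
        + intros x Hx. destruct (Hl x Hx) as [? _]. lra.
        + intros; apply cos_inj; auto.
      - intros r Hin. apply in_map_iff in Hin as [t [<- Ht]].
        destruct (Hl t Ht) as [_ Hz]. rewrite Hf in Hz. exact Hz. }
    rewrite length_map in H. unfold cs in H; simpl in H. lia.
Qed.
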